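(* Let $\Gamma$ be a graph and let $K_1,\dots,K_n$ be finitely many finite graphs. (1) If $\Gamma$ contains a finite set of vertices $X$ such that every subgraph of $\Gamma$ isomorphic to one of the $K_i$ has at least one vertex in $X$, then $\Gamma$ contains a finite set of vertices $Y$, invariant under all automorphisms of $\Gamma$, such that every subgraph of $\Gamma$ isomorphic to one of the $K_i$ has at least one vertex in $Y$, and $|Y|\le |X|\cdot\max_i(\text{number of vertices of }K_i)$. (2) If $\Gamma$ contains a finite set of edges $X$ such that every subgraph of $\Gamma$ isomorphic to one of the $K_i$ has at least one edge in $X$, then $\Gamma$ contains a finite set of edges $Y$, invariant under all automorphisms of $\Gamma$, such that every subgraph of $\Gamma$ isomorphic to one of the $K_i$ has at least one edge in $Y$, and $|Y|\le |X|\cdot\max_i(\text{number of edges of }K_i)$.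
   Context: ''Graph'' may be understood in any of the usual senses (directed, undirected, or mixed; multiple edges and/or loops allowed or not), fixed throughout; isomorphisms and automorphisms preserve the corresponding structure. ''Subgraph'' means an arbitrary (not necessarily induced) subgraph. $\Gamma$ may be infinite. *)

(* Defs.v *)
From Stdlib Require List.
From mathcomp Require Import all_boot.

Set Implicit Arguments. Unset Strict Implicit. Unset Printing Implicit Defensive.

(* Convention: a graph is a directed multigraph with loops allowed:
   a vertex type, an edge type, and source / target maps. *)
Record graph := Graph {
  gV : Type; gE : Type;
  gsrc : gE -> gV; gtgt : gE -> gV }.

Record fin_graph := FGraph {
  fV : finType; fE : finType;
  fsrc : fE -> fV; ftgt : fE -> fV }.

(* (VS, ES) is a (not necessarily induced) subgraph of G. *)
Definition is_subgraph (G : graph) (VS : gV G -> Prop) (ES : gE G -> Prop) :=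
  forall e, ES e -> VS (gsrc e) /\ VS (gtgt e).

Definition iso_to (G : graph) (VS : gV G -> Prop) (ES : gE G -> Prop)
    (K : fin_graph) :=
  exists (phi : fV K -> gV G) (psi : fE K -> gE G),
    injective phi /\ injective psi /\
    (forall v, VS v <-> exists x, phi x = v) /\
    (forall e, ES e <-> exists y, psi y = e) /\
    (forall y, gsrc (psi y) = phi (fsrc y) /\ gtgt (psi y) = phi (ftgt y)).

Definition automorphism (G : graph) (s : gV G -> gV G) (t : gE G -> gE G) :=
  bijective s /\ bijective t /\
  (forall e, gsrc (t e) = s (gsrc e) /\ gtgt (t e) = s (gtgt e)).

Definition vhits (G : graph) (Ks : list fin_graph) (X : list (gV G)) :=
  forall K VS ES, List.In K Ks -> is_subgraph VS ES -> iso_to VS ES K ->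
    exists v, VS v /\ List.In v X.

Definition ehits (G : graph) (Ks : list fin_graph) (X : list (gE G)) :=
  forall K VS ES, List.In K Ks -> is_subgraph VS ES -> iso_to VS ES K ->
    exists e, ES e /\ List.In e X.

Definition vinvariant (G : graph) (Y : list (gV G)) :=
  forall s t, automorphism s t -> forall v, List.In (s v) Y <-> List.In v Y.

Definition einvariant (G : graph) (Y : list (gE G)) :=
  forall s t, automorphism s t -> forall e, List.In (t e) Y <-> List.In e Y.

(* Main.v *)
Require Import Defs.
From Stdlib Require List.
From mathcomp Require Import all_boot.
From Stdlib Require Import List Lia ClassicalEpsilon Classical Permutation.
From mathcomp Require Import zify.

Definition lsum {A : Type} (f : A -> nat) (l : list A) : nat :=
  fold_right (fun x acc => f x + acc) 0 l.

Definition ind (P : Prop) : nat := if excluded_middle_informative P then 1 else 0.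

Lemma ind_le1 P : ind P <= 1.
Proof. unfold ind; destruct (excluded_middle_informative P); simpl; lia. Qed.
Lemma ind_T (P : Prop) : P -> ind P = 1.
Proof. unfold ind; destruct (excluded_middle_informative P); simpl; tauto. Qed.
Lemma ind_F (P : Prop) : ~ P -> ind P = 0.
Proof. unfold ind; destruct (excluded_middle_informative P); simpl; tauto. Qed.
Lemma ind_iff (P Q : Prop) : (P <-> Q) -> ind P = ind Q.
Proof. intro H. unfold ind; destruct (excluded_middle_informative P), (excluded_middle_informative Q); simpl; tauto. Qed.
Lemma ind_pos (P : Prop) : 0 < ind P -> P.
Proof. unfold ind; destruct (excluded_middle_informative P); simpl; auto; lia. Qed.

Lemma lsum_ext {A} (f g : A -> nat) l : (forall x, In x l -> f x = g x) -> lsum f l = lsum g l.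
Proof. induction l as [|a l IH]; simpl; [lia|]. intro H. f_equal; auto. Qed.
Lemma lsum_le {A} (f g : A -> nat) l : (forall x, In x l -> f x <= g x) -> lsum f l <= lsum g l.
Proof. induction l as [|a l IH]; simpl; [lia|]. intro H. have := H a (or_introl erefl). have := IH (fun x h => H x (or_intror h)). lia. Qed.
Lemma lsum_add {A} (f g : A -> nat) l : lsum (fun x => f x + g x) l = lsum f l + lsum g l.
Proof. induction l as [|a l IH]; simpl; [lia|]. rewrite IH. lia. Qed.
Lemma lsum_mull {A} c (f : A -> nat) l : lsum (fun x => c * f x) l = c * lsum f l.
Proof. induction l as [|a l IH]; simpl; [lia|]. rewrite IH. lia. Qed.
Lemma lsum_const {A} c (l : list A) : lsum (fun _ => c) l = length l * c.
Proof. induction l as [|a l IH]; simpl; [lia|]. rewrite IH. lia. Qed.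
Lemma lsum_ge {A} (f : A -> nat) l x : In x l -> f x <= lsum f l.
Proof. induction l as [|a l IH]; simpl; [tauto|]. intros [<-|h]; [lia|]. have := IH h; lia. Qed.
Lemma lsum_pos {A} (f : A -> nat) l : 0 < lsum f l -> exists x, In x l /\ 0 < f x.
Proof. induction l as [|a l IH]; simpl; [lia|]. intro h.
  destruct (f a) eqn:E. - destruct IH as [x [h1 h2]]; [lia|]. exists x; auto.
  - exists a; split; auto; lia. Qed.
Lemma lsum_exch {A B} (F : A -> B -> nat) la lb :
  lsum (fun a => lsum (fun b => F a b) lb) la = lsum (fun b => lsum (fun a => F a b) la) lb.
Proof. induction la as [|a la IH]; simpl.
  - induction lb; simpl; auto.
  - rewrite IH. rewrite <- lsum_add. reflexivity. Qed.
Lemma lsum_perm {A} (f : A -> nat) l l' : Permutation l l' -> lsum f l = lsum f l'.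
Proof. induction 1; simpl; lia. Qed.
Lemma lsum_map {A B} (f : B -> nat) (g : A -> B) l : lsum f (List.map g l) = lsum (fun x => f (g x)) l.
Proof. induction l; simpl; [lia|]; congruence. Qed.
Lemma lsum_ind_le {A} (P : A -> Prop) l : lsum (fun x => ind (P x)) l <= length l.
Proof. induction l; simpl; auto. have := ind_le1 (P a). lia. Qed.

Lemma size_length {A} (l : list A) : size l = length l.
Proof. induction l; simpl; [lia|]; congruence. Qed.

Section Abstract.
Variable V : Type.
Variable Edge : list V -> Prop.
Variable d : nat.
Variable Grp : (V -> V) -> Prop.
Hypothesis Edge_len : forall l, Edge l -> length l <= d.
Hypothesis Grp_id : Grp (fun x => x).
Hypothesis Grp_comp : forall f g, Grp f -> Grp g -> Grp (fun x => f (g x)).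
Hypothesis Grp_inv : forall f, Grp f ->
  exists g, Grp g /\ (forall x, g (f x) = x) /\ (forall x, f (g x) = x).
Hypothesis Grp_edge : forall f l, Grp f -> Edge l -> Edge (List.map f l).

Definition transv (T : list V) := forall l, Edge l -> exists v, In v l /\ In v T.

Definition decV : forall x y : V, {x = y} + {x <> y} :=
  fun x y => excluded_middle_informative (x = y).

Definition seqv (A B : list V) := forall v, In v A <-> In v B.

Lemma seqv_refl A : seqv A A. Proof. intro; tauto. Qed.
Lemma seqv_sym A B : seqv A B -> seqv B A. Proof. intros H v; rewrite H; tauto. Qed.
Lemma seqv_trans A B C : seqv A B -> seqv B C -> seqv A C.
Proof. intros H1 H2 v; rewrite H1 H2; tauto. Qed.
Lemma seqv_map (f : V -> V) A B : seqv A B -> seqv (List.map f A) (List.map f B).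
Proof. intros H v; rewrite !in_map_iff; split; intros [x [h1 h2]]; exists x; split; auto; apply H; auto. Qed.

Lemma map_cancel (f g : V -> V) (A : list V) : (forall x, g (f x) = x) -> List.map g (List.map f A) = A.
Proof. intro H. rewrite map_map. induction A; simpl; auto. rewrite H IHA; auto. Qed.

Lemma in_map_inv (f g : V -> V) (A : list V) v : (forall x, g (f x) = x) -> (forall x, f (g x) = x) ->
  (In v (List.map g A) <-> In (f v) A).
Proof. intros H1 H2. rewrite in_map_iff. split.
  - intros [u [<- h]]. rewrite H2; auto.
  - intro h. exists (f v). rewrite H1; auto. Qed.

Section Fixk.
Variable k : nat.

Definition forced (A : list V) :=
  forall T, length T <= k -> transv T -> exists v, In v A /\ In v T.

Definition MF (A : list V) :=
  NoDup A /\ length A <= d /\ forced A /\ forall B, incl B A -> forced B -> incl A B.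

Lemma forced_seqv A B : seqv A B -> forced A -> forced B.
Proof. intros H F T hT tT. destruct (F T hT tT) as [v [h1 h2]]. exists v; split; auto; apply H; auto. Qed.

Lemma edge_forced l : Edge l -> forced l.
Proof. intros H T _ tT. apply tT; auto. Qed.

Lemma forced_map (f : V -> V) A : Grp f -> forced A -> forced (List.map f A).
Proof.
  intros Gf F T hT tT. destruct (Grp_inv _ Gf) as [g [Gg [H1 H2]]].
  destruct (F (List.map g T)) as [a [ha1 ha2]].
  - rewrite length_map; auto.
  - intros l El. destruct (tT _ (Grp_edge _ _ Gf El)) as [v [hv1 hv2]].
    apply in_map_iff in hv1. destruct hv1 as [u [<- hu]].
    exists u; split; auto. apply in_map_iff. exists (f u); auto.
  - apply in_map_iff in ha2. destruct ha2 as [t [<- ht]].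
    exists t. split; auto. apply in_map_iff. exists (g t); auto.
Qed.

Lemma MF_map (f : V -> V) A : Grp f -> MF A -> MF (List.map f A).
Proof.
  intros Gf [N1 [N2 [N3 N4]]]. destruct (Grp_inv _ Gf) as [g [Gg [H1 H2]]].
  split; [|split; [|split]].
  - apply FinFun.Injective_map_NoDup; auto. intros x y e.
    have := f_equal g e; rewrite !H1; auto.
  - rewrite length_map; auto.
  - apply forced_map; auto.
  - intros B hB fB. 
    have h : incl A (List.map g B).
    { apply N4.
      - intros a ha. apply in_map_iff in ha. destruct ha as [b [<- hb]].
        destruct (in_map_iff f A b) as [h' _]. destruct (h' (hB _ hb)) as [a [<- ha]].
        rewrite H1; auto.
      - apply forced_map; auto. }
    intros x hx. apply in_map_iff in hx. destruct hx as [a [<- ha]].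
    have := h a ha. intro hh. apply in_map_iff in hh. destruct hh as [b [<- hb]].
    rewrite H2; auto.
Qed.

Lemma nodup_len (A : list V) : length (nodup decV A) <= length A.
Proof. apply/leP; apply NoDup_incl_length. apply NoDup_nodup. intros x; rewrite nodup_In; auto. Qed.

Lemma descent n : forall A, NoDup A -> length A <= n -> length A <= d -> forced A ->
  exists F, MF F /\ incl F A.
Proof.
  induction n as [|n IH]; intros A NA LA LdA FA;
  (destruct (classic (MF A)) as [M|M]; [exists A; split; auto; apply incl_refl|]);
  (have [B HB] : exists B, ~ (incl B A -> forced B -> incl A B)
     by (apply not_all_ex_not; intro HH; apply M; repeat split; auto));
  (have [iB [fB nAB]] : incl B A /\ forced B /\ ~ incl A B by tauto);
  (have [v [vA vB]] : exists v, In v A /\ ~ In v B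
     by (destruct (classic (exists v, In v A /\ ~ In v B)) as [hh|hh]; [exact hh|];
         exfalso; apply nAB; intros x hx;
         destruct (classic (In x B)); auto; exfalso; apply hh; exists x; auto)).
  - destruct A; simpl in *; [tauto|lia].
  - set B' := nodup decV B.
    have hl : length (v :: B') <= length A.
    { apply/leP; apply NoDup_incl_length.
      - constructor; [rewrite /B' nodup_In; auto | apply NoDup_nodup].
      - intros x [<-|hx]; auto. apply iB. rewrite /B' nodup_In in hx; auto. }
    simpl in hl.
    destruct (IH B') as [F [MFF iF]].
    + apply NoDup_nodup.
    + lia.
    + lia.
    + apply (forced_seqv B); auto. intro x; rewrite /B' nodup_In; tauto.
    + exists F; split; auto. intros x hx. apply iB. have := iF x hx. rewrite /B' nodup_In; auto.
Qed.

Lemma cover j : forall A, NoDup A -> exists L, forall F, MF F -> incl A F ->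
  length F <= length A + j -> exists B, In B L /\ seqv F B.
Proof.
  induction j as [|j IH]; intros A NA;
  (destruct (classic (forced A)) as [FA|FA];
   [ exists (A :: nil); intros F [_ [_ [_ MinF]]] iAF _; exists A; split; [left; auto|];
     intro v; split; [apply MinF; auto | apply iAF] |]);
  (have [T HT] : exists T, ~ (length T <= k -> transv T -> exists v, In v A /\ In v T)
     by (apply not_all_ex_not; exact FA));
  (have [lT [tT nT]] : length T <= k /\ transv T /\ ~ exists v, In v A /\ In v T by tauto).
  - exists nil. intros F [NF [_ [FF _]]] iAF lF.
    destruct (FF T lT tT) as [t [tF tTT]].
    have : length (t :: A) <= length F.
    { apply/leP; apply NoDup_incl_length.
      - constructor; auto. intro tA; apply nT; exists t; auto.
      - intros x [<-|hx]; auto. }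
    simpl; lia.
  - have HL : exists L, forall t, In t T -> ~ In t A -> forall F, MF F -> incl (t :: A) F ->
        length F <= length (t :: A) + j -> exists B, In B L /\ seqv F B.
    { clear tT nT lT HT. induction T as [|t0 T IHT].
      - exists nil. intros t [].
      - destruct IHT as [L1 HL1].
        destruct (classic (In t0 A)) as [t0A|t0A].
        + exists L1. intros t [<-|ht]; [tauto|]. apply HL1; auto.
        + destruct (IH (t0 :: A)) as [L2 HL2].
          { constructor; auto. }
          exists (L2 ++ L1). intros t [<-|ht] tA F MFF iF lF.
          * destruct (HL2 F MFF iF lF) as [B [hB sB]]. exists B; split; auto.
            apply in_or_app; auto.
          * destruct (HL1 t ht tA F MFF iF lF) as [B [hB sB]]. exists B; split; auto.
            apply in_or_app; auto. }
    destruct HL as [L HL]. exists L. intros F MFF iAF lF.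
    destruct MFF as [NF [dF [FF mF]]].
    destruct (FF T lT tT) as [t [tF tTT]].
    have tA : ~ In t A by (intro tA; apply nT; exists t; auto).
    apply (HL t tTT tA); [repeat split; auto| |].
    + intros x [<-|hx]; auto.
    + simpl; lia.
Qed.

Fixpoint dedupE (L : list (list V)) : list (list V) :=
  match L with
  | nil => nil
  | A :: L' => if excluded_middle_informative (exists B, In B L' /\ seqv A B)
               then dedupE L' else A :: dedupE L'
  end.

Lemma dedupE_incl L : incl (dedupE L) L.
Proof.
  induction L as [|A L IH]; simpl; [apply incl_refl|].
  destruct (excluded_middle_informative _); simpl.
  - intros x hx; right; auto.
  - intros x [<-|hx]; [left; auto| right; auto].
Qed.

Lemma dedupE_cover L A : In A L -> exists B, In B (dedupE L) /\ seqv A B.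
Proof.
  revert A; induction L as [|A0 L IH]; simpl; intro A; [tauto|]. intros [<-|hA];
  destruct (excluded_middle_informative _) as [e|e]; simpl.
  - destruct e as [B [hB sB]]. destruct (IH _ hB) as [B' [h1 h2]].
    exists B'; split; auto. eapply seqv_trans; eauto.
  - exists A0; split; [left; auto|]. apply seqv_refl.
  - apply IH; auto.
  - destruct (IH _ hA) as [B' [h1 h2]]; exists B'; split; [right|]; auto.
Qed.

Lemma dedupE_uniq L : NoDup (dedupE L) /\
  forall A B, In A (dedupE L) -> In B (dedupE L) -> seqv A B -> A = B.
Proof.
  induction L as [|A0 L [IH1 IH2]]; simpl; [split; [constructor|tauto]|].
  destruct (excluded_middle_informative _) as [e|e]; simpl; [split; auto|].
  have nin : forall B, In B (dedupE L) -> ~ seqv A0 B.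
  { intros B hB sB. apply e. exists B; split; auto. apply dedupE_incl; auto. }
  split.
  - constructor; auto. intro h. apply (nin A0 h), seqv_refl.
  - intros A B [<-|hA] [<-|hB] s; auto.
    + exfalso; apply (nin B hB s).
    + exfalso; apply (nin A hA). apply seqv_sym; auto.
Qed.

Lemma MF_seqv F B : MF F -> NoDup B -> seqv F B -> MF B.
Proof.
  intros [NF [dF [FF mF]]] NB s. split; [auto|split; [|split]].
  - have : length B <= length F by (apply/leP; apply NoDup_incl_length; auto; intros x; rewrite -s; auto).
    lia.
  - apply (forced_seqv F); auto.
  - intros C iC fC x hx. apply s in hx. apply (mF C); auto.
    intros y hy. apply s. apply iC; auto.
Qed.

Lemma LM_exists : exists LM : list (list V),
  (forall B, In B LM -> MF B) /\ (forall F, MF F -> exists B, In B LM /\ seqv F B) /\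
  NoDup LM /\ (forall A B, In A LM -> In B LM -> seqv A B -> A = B).
Proof.
  destruct (cover d nil (NoDup_nil _)) as [L0 HL0].
  set L1 := filter (fun A => if excluded_middle_informative (MF A) then true else false)
              (List.map (nodup decV) L0).
  exists (dedupE L1). destruct (dedupE_uniq L1) as [U1 U2].
  split; [|split; [|split]]; auto.
  - intros B hB. apply dedupE_incl in hB. apply filter_In in hB. destruct hB as [_ h].
    destruct (excluded_middle_informative (MF B)); auto; discriminate.
  - intros F MFF. destruct (HL0 F MFF) as [B [hB sB]].
    + intros x [].
    + destruct MFF as [_ [h _]]; simpl; auto.
    + have sB' : seqv F (nodup decV B) by (intro v; rewrite nodup_In; apply sB).
      have hB1 : In (nodup decV B) L1.
      { apply filter_In; split; [apply in_map; auto|].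
        destruct (excluded_middle_informative (MF (nodup decV B))) as [|n]; auto.
        exfalso; apply n. apply (MF_seqv F); auto. apply NoDup_nodup. }
      destruct (dedupE_cover _ _ hB1) as [B2 [h1 h2]]. exists B2; split; auto.
      eapply seqv_trans; eauto.
Qed.


Section Main.
Variable X : list V.
Hypothesis X_transv : transv X.
Hypothesis Hk : length X = k.
Variable LM : list (list V).
Hypothesis LM_MF : forall B, In B LM -> MF B.
Hypothesis LM_cov : forall F, MF F -> exists B, In B LM /\ seqv F B.
Hypothesis LM_nodup : NoDup LM.
Hypothesis LM_uniq : forall A B, In A LM -> In B LM -> seqv A B -> A = B.

Definition C := length LM.
Definition N := (d * k + 1) * C + 1.

Definition orbit (F A : list V) := exists f, Grp f /\ seqv A (List.map f F).
Definition inv (m : list V -> nat) :=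
  (forall A B, seqv A B -> m A = m B) /\ (forall f A, Grp f -> m (List.map f A) = m A).
Definition load (m : list V -> nat) v := lsum (fun B => m B * ind (In v B)) LM.
Definition total (m : list V -> nat) := lsum m LM.
Definition add (m : list V -> nat) F := fun A => m A + ind (orbit F A).

Lemma inv_add m F : inv m -> inv (add m F).
Proof.
  intros [I1 I2]. split.
  - intros A B s. rewrite /add (I1 A B s). f_equal. apply ind_iff.
    split; intros [f [Gf h]]; exists f; split; auto; eapply seqv_trans; eauto.
    apply seqv_sym; auto.
  - intros f A Gf. rewrite /add I2; auto. f_equal. apply ind_iff.
    destruct (Grp_inv _ Gf) as [g [Gg [H1 H2]]]. split.
    + intros [h [Gh s]]. exists (fun x => g (h x)). split; [apply Grp_comp; auto|].
      have e : A = List.map g (List.map f A) by rewrite map_cancel.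
      rewrite e. rewrite -(map_map h g). apply seqv_map; auto.
    + intros [h [Gh s]]. exists (fun x => f (h x)). split; [apply Grp_comp; auto|].
      rewrite -(map_map h f). apply seqv_map; auto.
Qed.

Lemma NoDup_map_on {A B} (p : A -> B) (l : list A) : NoDup l ->
  (forall x y, In x l -> In y l -> p x = p y -> x = y) -> NoDup (List.map p l).
Proof.
  induction l as [|a l IH]; simpl; intros Nl Hi; constructor.
  - intro h. apply in_map_iff in h. destruct h as [x [e hx]].
    inversion Nl; subst. have ex : x = a by (apply Hi; auto). subst; auto.
  - inversion Nl; subst. apply IH; auto.
Qed.

Lemma load_inv m f v : inv m -> Grp f -> load m (f v) = load m v.
Proof.
  intros [I1 I2] Gf. destruct (Grp_inv _ Gf) as [g [Gg [H1 H2]]].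
  have H : forall B, exists B', In B LM -> In B' LM /\ seqv B' (List.map g B).
  { intro B. destruct (classic (In B LM)) as [hB|hB]; [|exists B; tauto].
    destruct (LM_cov _ (MF_map _ _ Gg (LM_MF _ hB))) as [B' [h1 h2]].
    exists B'; intros _; split; auto; apply seqv_sym; auto. }
  set p := fun B => proj1_sig (constructive_indefinite_description _ (H B)).
  have Hp : forall B, In B LM -> In (p B) LM /\ seqv (p B) (List.map g B).
  { intro B. rewrite /p. destruct (constructive_indefinite_description _ (H B)); simpl; auto. }
  set h := fun B => m B * ind (In v B).
  have e1 : load m (f v) = lsum (fun B => h (p B)) LM.
  { apply lsum_ext. intros B hB. destruct (Hp B hB) as [h1 h2]. rewrite /h.
    rewrite (I1 _ _ h2) I2; auto. f_equal. apply ind_iff.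
    rewrite (h2 v). rewrite in_map_inv; auto. tauto. }
  rewrite e1 -(lsum_map h p). apply lsum_perm. apply Permutation_map_same_l.
  - apply NoDup_map_on; auto. intros x y hx hy e.
    destruct (Hp x hx) as [_ sx]. destruct (Hp y hy) as [_ sy]. apply LM_uniq; auto.
    intro u. have ex := in_map_inv f g x (g u) H1 H2. have ey := in_map_inv f g y (g u) H1 H2.
    rewrite H2 in ex ey. rewrite -ex -ey -(sx (g u)) -(sy (g u)) e. tauto.
  - intros B hB. apply in_map_iff in hB. destruct hB as [B0 [<- h0]]. apply Hp; auto.
Qed.

Lemma lsum_ind_nodup (B Z : list V) : NoDup Z -> lsum (fun v => ind (In v B)) Z <= length B.
Proof.
  intro NZ.
  have e : lsum (fun v => ind (In v B)) Z =
    length (filter (fun v => if excluded_middle_informative (In v B) then true else false) Z).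
  { clear NZ. induction Z as [|a Z IH]; simpl; auto.
    rewrite IH /ind. destruct (excluded_middle_informative (In a B)); simpl; auto. }
  rewrite e. apply/leP. apply NoDup_incl_length; [apply NoDup_filter; auto|].
  intros x hx. apply filter_In in hx. destruct hx as [_ hx].
  destruct (excluded_middle_informative (In x B)); auto; discriminate.
Qed.

Lemma total_le m : (forall v, load m v <= N) -> total m <= k * N.
Proof.
  intro HN.
  have e : lsum (load m) X = lsum (fun B => m B * lsum (fun x => ind (In x B)) X) LM.
  { rewrite /load lsum_exch. apply lsum_ext. intros B _. rewrite lsum_mull; auto. }
  have h1 : total m <= lsum (load m) X.
  { rewrite e /total. apply lsum_le. intros B hB.
    destruct (LM_MF _ hB) as [_ [_ [FB _]]].
    destruct (FB X) as [x [xB xX]]; [lia|auto|].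
    have := lsum_ge (fun x => ind (In x B)) _ _ xX. rewrite ind_T; auto. intro hh.
    have : m B * 1 <= m B * lsum (fun x0 => ind (In x0 B)) X by apply leq_mul.
    lia. }
  have h2 : lsum (load m) X <= length X * N.
  { rewrite -lsum_const. apply lsum_le; auto. }
  lia.
Qed.

Definition Z (m : list V -> nat) : list V :=
  filter (fun v => if excluded_middle_informative (N - C <= load m v) then true else false)
    (nodup decV (concat LM)).

Lemma In_Z m v : In v (Z m) <-> (exists B, In B LM /\ In v B) /\ N - C <= load m v.
Proof.
  rewrite /Z filter_In nodup_In in_concat.
  destruct (excluded_middle_informative (N - C <= load m v)); split; intros [h1 h2]; split; auto;
  try discriminate; try tauto.
Qed.

Lemma Z_nodup m : NoDup (Z m).
Proof. apply NoDup_filter, NoDup_nodup. Qed.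

Lemma Z_len m : inv m -> (forall v, load m v <= N) -> length (Z m) * (N - C) <= d * (k * N).
Proof.
  intros Im HN.
  have h1 : length (Z m) * (N - C) <= lsum (load m) (Z m).
  { rewrite -lsum_const. apply lsum_le. intros x hx. apply In_Z in hx. tauto. }
  have e : lsum (load m) (Z m) = lsum (fun B => m B * lsum (fun x => ind (In x B)) (Z m)) LM.
  { rewrite /load lsum_exch. apply lsum_ext. intros B _. rewrite lsum_mull; auto. }
  have h2 : lsum (load m) (Z m) <= d * total m.
  { rewrite e /total -lsum_mull. apply lsum_le. intros B hB.
    have := lsum_ind_nodup B (Z m) (Z_nodup m). destruct (LM_MF _ hB) as [_ [dB _]].
    intro hh. have : lsum (fun x => ind (In x B)) (Z m) <= d by lia.
    intro h3. rewrite mulnC. apply leq_mul; auto. }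
  have := total_le m HN. nia.
Qed.

Definition valid m := inv m /\ forall v, load m v <= N.
Definition maxim m := forall F, In F LM -> exists v, N < load (add m F) v.

Lemma load_add m F v :
  load (add m F) v = load m v + lsum (fun B => ind (orbit F B) * ind (In v B)) LM.
Proof. rewrite /load /add -lsum_add. apply lsum_ext. intros; lia. Qed.

Lemma load_add_le m F v : load (add m F) v <= load m v + C.
Proof.
  rewrite load_add.
  have : lsum (fun B => ind (orbit F B) * ind (In v B)) LM <= lsum (fun _ => 1) LM.
  { apply lsum_le. intros x _. have := ind_le1 (orbit F x). have := ind_le1 (In v x). nia. }
  rewrite lsum_const /C. lia.
Qed.

Lemma exists_max : exists m, valid m /\ maxim m.
Proof.
  have key : forall n m, valid m -> k * N - total m <= n -> exists m', valid m' /\ maxim m'.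
  { induction n as [|n IH]; intros m [Im Lm] hn;
    (destruct (classic (maxim m)) as [M|M]; [exists m; split; [split|]; auto|]);
    (have [F HF] : exists F, ~ (In F LM -> exists v, N < load (add m F) v)
       by (apply not_all_ex_not; exact M));
    (have [FL HF2] : In F LM /\ forall v, load (add m F) v <= N
       by (split; [tauto|]; intro v; destruct (leqP (load (add m F) v) N) as [|h]; auto;
           exfalso; apply HF; intros _; exists v; auto));
    (have Iadd := inv_add m F Im);
    (have Tadd : total m < total (add m F)
       by (rewrite /total /add lsum_add;
           have := lsum_ge (fun B => ind (orbit F B)) _ _ FL;
           rewrite ind_T; [lia|]; exists (fun x => x); split; auto;
           rewrite map_id; apply seqv_refl));
    (have Tle := total_le _ HF2).
    - lia.
    - apply (IH (add m F)); [split; auto|]. lia. }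
  apply (key (k * N) (fun _ => 0)); [|lia].
  split; [split; auto|].
  intro v. rewrite /load. rewrite (lsum_ext _ (fun _ => 0)); [|intros; lia].
  rewrite (lsum_const 0 LM). lia.
Qed.

Lemma Z_hits_MF m F : valid m -> maxim m -> MF F -> exists u, In u F /\ In u (Z m).
Proof.
  intros [Im Lm] Mm MFF. destruct (LM_cov _ MFF) as [B [hB sB]].
  destruct (Mm B hB) as [w hw].
  have := load_add_le m B w. have := Lm w. rewrite load_add in hw. intros h1 h2.
  have [B' [hB' pos]] : exists B', In B' LM /\ 0 < ind (orbit B B') * ind (In w B')
    by (apply lsum_pos; lia).
  have o : orbit B B' by (apply ind_pos; nia).
  have wB' : In w B' by (apply ind_pos; nia).
  destruct o as [f [Gf s]]. apply s in wB'. apply in_map_iff in wB'.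
  destruct wB' as [u [<- uB]].
  exists u. split; [apply sB; auto|]. apply In_Z. split; [exists B; auto|].
  rewrite -(load_inv m f u Im Gf). rewrite load_add in h2. lia.
Qed.

Lemma Z_transv m : valid m -> maxim m -> transv (Z m).
Proof.
  intros Vm Mm l El.
  destruct (descent (length (nodup decV l)) (nodup decV l)) as [F [MFF iF]].
  - apply NoDup_nodup.
  - lia.
  - have := nodup_len l. have := Edge_len _ El. lia.
  - apply (forced_seqv l); [intro v; rewrite nodup_In; tauto|]. apply edge_forced; auto.
  - destruct (Z_hits_MF m F Vm Mm MFF) as [u [uF uZ]]. exists u; split; auto.
    apply iF in uF. rewrite nodup_In in uF; auto.
Qed.

Lemma memLM f u : Grp f -> (exists B, In B LM /\ In u B) -> (exists B, In B LM /\ In (f u) B).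
Proof.
  intros Gf [B [hB uB]]. destruct (LM_cov _ (MF_map _ _ Gf (LM_MF _ hB))) as [B' [h1 h2]].
  exists B'; split; auto. apply h2. apply in_map; auto.
Qed.

Lemma Z_inv m f v : inv m -> Grp f -> In (f v) (Z m) <-> In v (Z m).
Proof.
  intros Im Gf. destruct (Grp_inv _ Gf) as [g [Gg [H1 H2]]].
  rewrite !In_Z (load_inv m f v Im Gf). split; intros [h1 h2]; split; auto.
  - rewrite -(H1 v). apply memLM; auto.
  - apply memLM; auto.
Qed.

Lemma main_abstract : exists Y, NoDup Y /\ (forall f, Grp f -> forall v, In (f v) Y <-> In v Y) /\
  transv Y /\ length Y <= k * d.
Proof.
  destruct exists_max as [m [Vm Mm]]. exists (Z m). split; [apply Z_nodup|split; [|split]].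
  - intros f Gf v. apply Z_inv; auto. apply Vm.
  - apply Z_transv; auto.
  - have := Z_len m (proj1 Vm) (proj2 Vm). rewrite /N. set D := d * k.
    intro h. rewrite mulnC -/D. 
    have eN : (D + 1) * C + 1 - C = D * C + 1 by lia.
    rewrite eN mulnA -/D in h.
    destruct (leqP (length (Z m)) D) as [|hc]; auto.
    exfalso. have : (D + 1) * (D * C + 1) <= length (Z m) * (D * C + 1) by (apply leq_mul; lia).
    clearbody D. nia.
Qed.

End Main.

End Fixk.
End Abstract.

Arguments transv {V} Edge T.

Theorem abstract_thm (V : Type) (Edge : list V -> Prop) (d : nat) (Grp : (V -> V) -> Prop)
  (Edge_len : forall l, Edge l -> length l <= d)
  (Grp_id : Grp (fun x => x))
  (Grp_comp : forall f g, Grp f -> Grp g -> Grp (fun x => f (g x)))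
  (Grp_inv : forall f, Grp f ->
    exists g, Grp g /\ (forall x, g (f x) = x) /\ (forall x, f (g x) = x))
  (Grp_edge : forall f l, Grp f -> Edge l -> Edge (List.map f l))
  (X : list V) : transv Edge X ->
  exists Y, NoDup Y /\ (forall f, Grp f -> forall v, In (f v) Y <-> In v Y) /\
    transv Edge Y /\ length Y <= length X * d.
Proof.
  intro tX. destruct (LM_exists V Edge d (length X)) as [LM [h1 [h2 [h3 h4]]]].
  eapply main_abstract; eauto.
Qed.

Lemma inE_In (T : eqType) (x : T) (s : list T) : x \in s <-> List.In x s.
Proof.
  elim: s => [|y s IH] //=. rewrite seq.in_cons. split.
  - move/orP => [/eqP ->|h]; [left|right; apply IH]; auto.
  - move=> [->|h]; apply/orP; [left|right; apply/IH]; auto.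
Qed.

Lemma uniq_NoDup (T : eqType) (s : list T) : uniq s -> NoDup s.
Proof.
  elim: s => [|y s IH] /=; [constructor|]. move/andP=> [h1 h2]. constructor; [|apply IH; auto].
  move/inE_In => h. rewrite h in h1. discriminate.
Qed.

Lemma le_bigmax_In (Ks : list fin_graph) (F : fin_graph -> nat) K :
  List.In K Ks -> F K <= \max_(K <- Ks) F K.
Proof.
  elim: Ks => [|K0 Ks IH] //= h. rewrite big_cons. case: h => [->|h].
  - apply leq_maxl.
  - apply (leq_trans (IH h)). apply leq_maxr.
Qed.

Lemma transport (G : graph) s t (VS : gV G -> Prop) (ES : gE G -> Prop) K :
  automorphism s t -> is_subgraph VS ES -> iso_to VS ES K ->
  is_subgraph (fun v => exists u, VS u /\ s u = v) (fun e => exists u, ES u /\ t u = e) /\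
  iso_to (fun v => exists u, VS u /\ s u = v) (fun e => exists u, ES u /\ t u = e) K.
Proof.
  move=> [bs [bt inc]] sub [phi [psi [iphi [ipsi [hV [hE hI]]]]]]. split.
  - move=> e [u [Eu <-]]. have [h1 h2] := sub u Eu. have [i1 i2] := inc u.
    rewrite i1 i2. split; [exists (gsrc u)|exists (gtgt u)]; auto.
  - exists (fun x => s (phi x)), (fun y => t (psi y)). split; [|split; [|split; [|split]]].
    + move=> x y e. apply iphi. apply (bij_inj bs e).
    + move=> x y e. apply ipsi. apply (bij_inj bt e).
    + move=> v. split.
      * move=> [u [Vu <-]]. have [x hx] := (proj1 (hV u) Vu). exists x. rewrite hx; auto.
      * move=> [x <-]. exists (phi x). split; auto. apply hV. exists x; auto.
    + move=> e. split.
      * move=> [u [Eu <-]]. have [x hx] := (proj1 (hE u) Eu). exists x. rewrite hx; auto.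
      * move=> [x <-]. exists (psi x). split; auto. apply hE. exists x; auto.
    + move=> y. have [i1 i2] := inc (psi y). have [j1 j2] := hI y. rewrite i1 i2 j1 j2; auto.
Qed.

Lemma aut_id (G : graph) : @automorphism G (fun x => x) (fun x => x).
Proof. split; [exists (fun x => x)|split; [exists (fun x => x)|]]; try done. Qed.

Lemma aut_comp (G : graph) s1 t1 s2 t2 : @automorphism G s1 t1 -> automorphism s2 t2 ->
  automorphism (fun x => s1 (s2 x)) (fun x => t1 (t2 x)).
Proof.
  move=> [b1 [c1 i1]] [b2 [c2 i2]]. split; [|split].
  - apply (bij_comp b1 b2).
  - apply (bij_comp c1 c2).
  - move=> e. have [h1 h2] := i2 e. have [h3 h4] := i1 (t2 e). rewrite h3 h4 h1 h2; auto.
Qed.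

Lemma aut_inv (G : graph) s t : @automorphism G s t -> exists s' t', automorphism s' t' /\
  (forall x, s' (s x) = x) /\ (forall x, s (s' x) = x) /\
  (forall x, t' (t x) = x) /\ (forall x, t (t' x) = x).
Proof.
  move=> [[s' c1 c2] [[t' d1 d2] inc]]. exists s', t'. repeat split; auto.
  - exists s; auto.
  - exists t; auto.
  - have [h _] := inc (t' e). rewrite d2 in h. rewrite h c1; auto.
  - have [_ h] := inc (t' e). rewrite d2 in h. rewrite h c1; auto.
Qed.

Definition vEdge (G : graph) (Ks : list fin_graph) (l : list (gV G)) :=
  NoDup l /\ exists K VS ES, List.In K Ks /\ is_subgraph VS ES /\ iso_to VS ES K /\
    (forall v, VS v <-> In v l).
Definition eEdge (G : graph) (Ks : list fin_graph) (l : list (gE G)) :=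
  NoDup l /\ exists K VS ES, List.In K Ks /\ is_subgraph VS ES /\ iso_to VS ES K /\
    (forall e, ES e <-> In e l).

Arguments vEdge {G} Ks l.
Arguments eEdge {G} Ks l.

Lemma enum_In (T : finType) (x : T) : List.In x (enum T).
Proof. apply/inE_In. rewrite mem_enum. done. Qed.

Lemma len_eq {A} (l1 l2 : list A) : NoDup l1 -> NoDup l2 -> (forall x, In x l1 <-> In x l2) ->
  length l1 = length l2.
Proof.
  move=> n1 n2 h.
  have a : (length l1 <= length l2)%coq_nat by apply NoDup_incl_length; auto; move=> x; rewrite h.
  have b : (length l2 <= length l1)%coq_nat by apply NoDup_incl_length; auto; move=> x; rewrite -h.
  lia.
Qed.

Theorem mainTheorem3 (G : graph) (Ks : list fin_graph) :
  (forall X : list (gV G), List.NoDup X -> vhits Ks X ->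
     exists Y : list (gV G), List.NoDup Y /\ vinvariant Y /\ vhits Ks Y /\
       (size Y <= size X * \max_(K <- Ks) #|fV K|)%N)
  /\
  (forall X : list (gE G), List.NoDup X -> ehits Ks X ->
     exists Y : list (gE G), List.NoDup Y /\ einvariant Y /\ ehits Ks Y /\
       (size Y <= size X * \max_(K <- Ks) #|fE K|)%N).
Proof.
  split.
  - move=> X _ HX.
    have copyl : forall K VS ES, List.In K Ks -> is_subgraph VS ES -> @iso_to G VS ES K ->
      exists l : list (gV G), vEdge Ks l /\ length l = #|fV K| /\ (forall v, VS v <-> In v l).
    { move=> K VS ES hK sub iso. have iso' := iso.
      destruct iso' as [phi [psi [iphi [_ [hV _]]]]].
      have hl : forall v, VS v <-> In v (List.map phi (enum (fV K))).
      { move=> v; split.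
        + move/hV=> [x <-]. apply in_map, enum_In.
        + move/in_map_iff=> [x [<- _]]. apply hV. exists x; auto. }
      exists (List.map phi (enum (fV K))). split; [split|split; [|exact hl]].
      - apply FinFun.Injective_map_NoDup; [exact iphi|]. apply uniq_NoDup, enum_uniq.
      - exists K, VS, ES. split; [auto|split; [auto|split; [auto|exact hl]]].
      - rewrite length_map -size_length cardE. done. }
    have tX : transv (vEdge Ks) X.
    { move=> l [Nl [K [VS [ES [hK [sub [iso hl]]]]]]].
      have [v [h1 h2]] := HX K VS ES hK sub iso. exists v; split; auto. apply hl; auto. }
    have Elen : forall l : list (gV G), vEdge Ks l -> length l <= \max_(K <- Ks) #|fV K|.
    { move=> l [Nl [K [VS [ES [hK [sub [iso hl]]]]]]].
      have [l' [[Nl' _] [e hl']]] := copyl K VS ES hK sub iso.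
      have -> : length l = length l'.
      { apply len_eq; auto. move=> v. rewrite -hl -hl'. tauto. }
      rewrite e. apply (le_bigmax_In Ks (fun K => #|fV K|)); auto. }
    have Gid : (fun s => exists t, @automorphism G s t) (fun x => x).
    { exists (fun x => x). apply aut_id. }
    have Gcomp : forall f g, (fun s => exists t, @automorphism G s t) f ->
        (fun s => exists t, @automorphism G s t) g ->
        (fun s => exists t, @automorphism G s t) (fun x => f (g x)).
    { move=> f g [t1 A1] [t2 A2]. exists (fun x => t1 (t2 x)). apply (aut_comp _ _ _ _ _ A1 A2). }
    have Ginv : forall f, (fun s => exists t, @automorphism G s t) f ->
        exists g, (fun s => exists t, @automorphism G s t) g /\
          (forall x, g (f x) = x) /\ (forall x, f (g x) = x).
    { move=> f [t A]. have [s' [t' [A' [c1 [c2 _]]]]] := aut_inv _ _ _ A.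
      exists s'. split; [exists t'|split]; auto. }
    have Gedge : forall (f : gV G -> gV G) (l : list (gV G)), (fun s => exists t, @automorphism G s t) f ->
        vEdge Ks l -> vEdge Ks (List.map f l).
    { move=> f l [t A] [Nl [K [VS [ES [hK [sub [iso hl]]]]]]].
      have [sub' iso'] := transport _ _ _ _ _ _ A sub iso. split.
      - apply FinFun.Injective_map_NoDup; auto. case: A => [bs _]. apply (bij_inj bs).
      - exists K, (fun v => exists u, VS u /\ f u = v), (fun e => exists u, ES u /\ t u = e).
        split; [auto|split; [auto|split; [auto|]]]. move=> v. rewrite in_map_iff.
        split; move=> [u [h1 h2]]; exists u; split; try apply hl; auto. }
    have [Y [NY [IY [TY LY]]]] := abstract_thm _ _ _ _ Elen Gid Gcomp Ginv Gedge X tX.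
    exists Y. split; [auto|split; [|split]].
    + move=> s t A v. apply IY. exists t; auto.
    + move=> K VS ES hK sub iso.
      have [l [El [_ hl]]] := copyl K VS ES hK sub iso.
      have [v [h1 h2]] := TY l El. exists v; split; auto. apply hl; auto.
    + rewrite !size_length. auto.
  - move=> X _ HX.
    have copyl : forall K VS ES, List.In K Ks -> is_subgraph VS ES -> @iso_to G VS ES K ->
      exists l : list (gE G), eEdge Ks l /\ length l = #|fE K| /\ (forall e, ES e <-> In e l).
    { move=> K VS ES hK sub iso. have iso' := iso.
      destruct iso' as [phi [psi [_ [ipsi [_ [hE _]]]]]].
      have hl : forall e, ES e <-> In e (List.map psi (enum (fE K))).
      { move=> e; split.
        + move/hE=> [x <-]. apply in_map, enum_In.
        + move/in_map_iff=> [x [<- _]]. apply hE. exists x; auto. }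
      exists (List.map psi (enum (fE K))). split; [split|split; [|exact hl]].
      - apply FinFun.Injective_map_NoDup; [exact ipsi|]. apply uniq_NoDup, enum_uniq.
      - exists K, VS, ES. split; [auto|split; [auto|split; [auto|exact hl]]].
      - rewrite length_map -size_length cardE. done. }
    have tX : transv (eEdge Ks) X.
    { move=> l [Nl [K [VS [ES [hK [sub [iso hl]]]]]]].
      have [v [h1 h2]] := HX K VS ES hK sub iso. exists v; split; auto. apply hl; auto. }
    have Elen : forall l : list (gE G), eEdge Ks l -> length l <= \max_(K <- Ks) #|fE K|.
    { move=> l [Nl [K [VS [ES [hK [sub [iso hl]]]]]]].
      have [l' [[Nl' _] [e hl']]] := copyl K VS ES hK sub iso.
      have -> : length l = length l'.
      { apply len_eq; auto. move=> v. rewrite -hl -hl'. tauto. }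
      rewrite e. apply (le_bigmax_In Ks (fun K => #|fE K|)); auto. }
    have Gid : (fun t => exists s, @automorphism G s t) (fun x => x).
    { exists (fun x => x). apply aut_id. }
    have Gcomp : forall f g, (fun t => exists s, @automorphism G s t) f ->
        (fun t => exists s, @automorphism G s t) g ->
        (fun t => exists s, @automorphism G s t) (fun x => f (g x)).
    { move=> f g [s1 A1] [s2 A2]. exists (fun x => s1 (s2 x)). apply (aut_comp _ _ _ _ _ A1 A2). }
    have Ginv : forall f, (fun t => exists s, @automorphism G s t) f ->
        exists g, (fun t => exists s, @automorphism G s t) g /\
          (forall x, g (f x) = x) /\ (forall x, f (g x) = x).
    { move=> f [s A]. have [s' [t' [A' [_ [_ [c1 c2]]]]]] := aut_inv _ _ _ A.
      exists t'. split; [exists s'|split]; auto. }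
    have Gedge : forall (f : gE G -> gE G) (l : list (gE G)),
        (fun t => exists s, @automorphism G s t) f ->
        eEdge Ks l -> eEdge Ks (List.map f l).
    { move=> f l [s A] [Nl [K [VS [ES [hK [sub [iso hl]]]]]]].
      have [sub' iso'] := transport _ _ _ _ _ _ A sub iso. split.
      - apply FinFun.Injective_map_NoDup; auto. case: A => [_ [bt _]]. apply (bij_inj bt).
      - exists K, (fun v => exists u, VS u /\ s u = v), (fun e => exists u, ES u /\ f u = e).
        split; [auto|split; [auto|split; [auto|]]]. move=> v. rewrite in_map_iff.
        split; move=> [u [h1 h2]]; exists u; split; try apply hl; auto. }
    have [Y [NY [IY [TY LY]]]] := abstract_thm _ _ _ _ Elen Gid Gcomp Ginv Gedge X tX.
    exists Y. split; [auto|split; [|split]].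
    + move=> s t A v. apply IY. exists s; auto.
    + move=> K VS ES hK sub iso.
      have [l [El [_ hl]]] := copyl K VS ES hK sub iso.
      have [v [h1 h2]] := TY l El. exists v; split; auto. apply hl; auto.
    + rewrite !size_length. auto.
Qed.
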